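(* Let $\beta\in\{1,2\}$ and let $r\geq\beta$ be an integer. Let $x\in[0,1]^N$ and let $q=Q^{\Sigma\Delta,r}_{\mathcal{A}_\delta}(x)$ be its $r$-th order $\Sigma\Delta$ quantization, whose state vector $u$ satisfies $x-q=D^ru$ and $\|u\|_\infty\leq\delta/2$. Let $\hat x$ be a solution to $$\min_{z\in\mathbb{R}^N}\|(D^\beta)^Tz\|_1\quad\text{subject to}\quad \|D^{-r}(z-q)\|_\infty\leq\delta/2.$$ Then for every integer $1\leq s\leq N$, $$\|\hat x-x\|_2\leq C\Big(\sqrt{s}\,\delta+\sqrt{\sigma_s((D^\beta)^Tx)\,\delta}\Big),$$ where $C$ is a constant independent of $x$.
   Context: $D$ is the $N\times N$ matrix with $1$ on the diagonal, $-1$ on the subdiagonal, $0$ elsewhere. For $z\in\mathbb{R}^N$, $\sigma_s(z)=\min_{v\ s\text{-sparse}}\|v-z\|_1$ is the $\ell_1$ error of the best $s$-term approximation. The alphabet is $\mathcal{A}_\delta=\{c+J\delta: J\in\mathbb{Z},\ J_1\leq J\leq J_2\}$, and $Q_{\mathcal{A}}(z)$ is an element of $\mathcal{A}$ nearest to $z$. The $r$-th order $\Sigma\Delta$ quantization of $y\in\mathbb{R}^N$: with $u_i=0$ for $i\leq0$, set $q_i=Q_{\mathcal{A}}\big(\sum_{j=1}^r(-1)^{j-1}\binom{r}{j}u_{i-j}+y_i\big)$ and define $u_i$ by $(D^ru)_i=y_i-q_i$, $i=1,\dots,N$. The alphabet is assumed to have enough levels that $\|u\|_\infty\leq\delta/2$.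 *)

(* Defs.v *)
From HB Require Import structures.
From mathcomp Require Import all_boot all_order all_algebra.
From mathcomp Require Import classical_sets reals.
Set Implicit Arguments. Unset Strict Implicit. Unset Printing Implicit Defensive.
Import Order.TTheory GRing.Theory Num.Theory.
Local Open Scope ring_scope.


Section Defs.
Variable R : realType.

Definition Dmx (N : nat) : 'M[R]_N :=
  \matrix_(i < N, j < N)
     (if i == j :> nat then 1 else if i == j.+1 :> nat then -1 else 0).

Definition l1norm N (v : 'cV[R]_N) : R := \sum_(i < N) `|v i 0|.
Definition l2norm N (v : 'cV[R]_N) : R := Num.sqrt (\sum_(i < N) (v i 0) ^+ 2).
Definition linfnorm N (v : 'cV[R]_N) : R := \big[Num.max/0]_(i < N) `|v i 0|.

Definition sparse N (s : nat) (v : 'cV[R]_N) : bool :=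
  (#|[pred i : 'I_N | v i ord0 != 0%R]| <= s)%N.

Definition sigma_s N (s : nat) (z : 'cV[R]_N) : R :=
  inf [set e | exists v : 'cV[R]_N, sparse s v /\ e = l1norm (v - z)]%classic.

Definition alphabet (c delta : R) (J1 J2 : int) : set R :=
  [set a | exists J : int, (J1 <= J <= J2)%R /\ a = c + J%:~R * delta]%classic.

Definition vat N (v : 'cV[R]_N) (k : nat) : R :=
  if @insub nat (fun k => k < N)%N _ k is Some i then v i 0 else 0.

(* q is the r-th order Sigma-Delta quantization of y over alphabet A, with
   state vector u (indices shifted to start at 0; u_i = 0 for i < 0):
   q_i is an element of A nearest to sum_{j=1}^r (-1)^(j-1) C(r,j) u_{i-j} + y_i,
   and (D^r u)_i = y_i - q_i. *)
Definition sigma_delta N (r : nat) (A : set R) (y q u : 'cV[R]_N) : Prop :=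
  (forall i : 'I_N,
     let v := \sum_(1 <= j < r.+1)
                (-1) ^+ j.-1 * ('C(r, j))%:R * (if (j <= i)%N then vat u (i - j) else 0)
              + y i 0 in
     A (q i 0) /\ forall a, A a -> `|v - q i 0| <= `|v - a|)
  /\ (Dmx N) ^+ r *m u = y - q.

Definition feasible N (r : nat) (delta : R) (q z : 'cV[R]_N) : Prop :=
  linfnorm (invmx ((Dmx N) ^+ r) *m (z - q)) <= delta / 2.

Definition is_minimizer N (beta r : nat) (delta : R) (q xh : 'cV[R]_N) : Prop :=
  feasible r delta q xh /\
  forall z, feasible r delta q z ->
    l1norm (((Dmx N) ^+ beta)^T *m xh) <= l1norm (((Dmx N) ^+ beta)^T *m z).

End Defs.

(* Main.v *)
Require Import Defs.
From HB Require Import structures.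
From mathcomp Require Import all_boot all_order all_algebra.
From mathcomp Require Import classical_sets reals.
From mathcomp Require Import ring lra.
Import Order.TTheory GRing.Theory Num.Theory.
Local Open Scope ring_scope.

Section Aux.
Variable R : realType.

Lemma sum_eqnat N (a : nat) :
  \sum_(j < N) (((nat_of_ord j == a) : nat)%:R : R) = ((a < N)%N : nat)%:R.
Proof.
elim: N => [|N IH]; first by rewrite big_ord0 ltn0.
rewrite big_ord_recr /= IH ltnS.
case: (ltngtP a N) => H; rewrite /= ?addr0 ?add0r //.
Qed.

Lemma sum_eqnat_le N a : \sum_(j < N) (((nat_of_ord j == a) : nat)%:R : R) <= 1.
Proof. by rewrite sum_eqnat; case: (a < N)%N. Qed.

Lemma D_row N (i : 'I_N) : \sum_j `|Dmx R N i j| <= 2.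
Proof.
apply: (@le_trans _ _ (\sum_(j < N) ((((nat_of_ord j == nat_of_ord i) : nat)%:R : R)
     + (((nat_of_ord j == (nat_of_ord i).-1) : nat)%:R)))).
  apply: ler_sum => j _; rewrite mxE.
  case: (eqVneq (nat_of_ord i) (nat_of_ord j)) => [E1|H1].
    rewrite E1 /= ?eqxx normr1 /=; case: (_ == _) => /=; lra.
  rewrite /= ?(eq_sym (nat_of_ord j)) ?(negbTE H1) /=.
  case: (eqVneq (nat_of_ord i) (nat_of_ord j).+1) => [E2|H2] /=.
    by rewrite E2 /= ?eqxx normrN normr1 /=; lra.
  rewrite normr0; case: (_ == _) => /=; lra.
rewrite big_split /=.
have := sum_eqnat_le N i; have := sum_eqnat_le N (nat_of_ord i).-1; lra.
Qed.

Lemma D_col N (j : 'I_N) : \sum_i `|Dmx R N i j| <= 2.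
Proof.
apply: (@le_trans _ _ (\sum_(i < N) ((((nat_of_ord i == nat_of_ord j) : nat)%:R : R)
     + (((nat_of_ord i == (nat_of_ord j).+1) : nat)%:R)))).
  apply: ler_sum => i _; rewrite mxE.
  case: (eqVneq (nat_of_ord i) (nat_of_ord j)) => [E1|H1].
    rewrite E1 /= ?eqxx normr1 /=; case: (_ == _) => /=; lra.
  rewrite /=.
  case: (eqVneq (nat_of_ord i) (nat_of_ord j).+1) => [E2|H2] /=.
    by rewrite normrN normr1 /=; lra.
  rewrite normr0; lra.
rewrite big_split /=.
have := sum_eqnat_le N j; have := sum_eqnat_le N (nat_of_ord j).+1; lra.
Qed.

Lemma mx_bound N (A : 'M[R]_N) (v : 'cV[R]_N) (a m : R) :
  0 <= m -> (forall i, \sum_j `|A i j| <= a) -> (forall i, `|v i 0| <= m) ->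
  forall i, `|(A *m v) i 0| <= a * m.
Proof.
move=> m0 HA Hv i; rewrite mxE.
apply: (le_trans (ler_norm_sum _ _ _)).
apply: (@le_trans _ _ (\sum_j `|A i j| * m)).
  apply: ler_sum => j _; rewrite normrM; apply: ler_wpM2l => //.
rewrite -mulr_suml; apply: ler_wpM2r => //.
Qed.

Lemma Dpow_bound N k (v : 'cV[R]_N) (m : R) : 0 <= m -> (forall i, `|v i 0| <= m) ->
  forall i, `|((Dmx R N) ^+ k *m v) i 0| <= 2 ^+ k * m.
Proof.
move=> m0; elim: k v => [|k IH] v Hv i.
  by rewrite expr0 mul1mx mul1r.
rewrite exprS -mulmxE -mulmxA exprS -mulrA.
apply: (@mx_bound _ _ _ _ (2 ^+ k * m)) => //.
- by apply: mulr_ge0 => //; apply: exprn_ge0.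
- exact: D_row.
- exact: IH.
Qed.

Lemma DpowT_bound N k (v : 'cV[R]_N) (m : R) : 0 <= m -> (forall i, `|v i 0| <= m) ->
  forall i, `|(((Dmx R N) ^+ k)^T *m v) i 0| <= 2 ^+ k * m.
Proof.
move=> m0; elim: k v => [|k IH] v Hv i.
  by rewrite expr0 trmx1 mul1mx mul1r.
rewrite exprSr -mulmxE trmx_mul -mulmxA exprS -mulrA.
apply: (@mx_bound _ _ _ _ (2 ^+ k * m)) => //.
- by apply: mulr_ge0 => //; apply: exprn_ge0.
- by move=> j; under eq_bigr do rewrite mxE; exact: D_col.
- exact: IH.
Qed.

Lemma Dpow_unit N k : (Dmx R N) ^+ k \in unitmx.
Proof.
have HD : \det (Dmx R N) = 1.
  rewrite det_trig; last first.
    apply/is_trig_mxP => i j Hij; rewrite mxE.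
    rewrite (ltn_eqF Hij).
    by have -> : (nat_of_ord i == (nat_of_ord j).+1) = false by apply/eqP => E; move: Hij; rewrite E => /ltnW; rewrite ltnn.
  by apply: big1 => i _; rewrite mxE eqxx.
elim: k => [|k IH]; first by rewrite expr0 unitmx1.
by rewrite exprS -mulmxE unitmx_mul IH unitmxE HD unitr1.
Qed.

Lemma linf_le N (v : 'cV[R]_N) i : `|v i 0| <= linfnorm v.
Proof. exact: (le_bigmax 0 (fun i : 'I_N => `|v i 0|) i). Qed.

Lemma cone N (z y v' : 'cV[R]_N) (s : nat) (M : R) :
  sparse s v' -> l1norm (z + y) <= l1norm z -> 0 <= M ->
  (forall i, `|y i 0| <= M) ->
  l1norm y <= 2 * (s%:R * M) + 2 * l1norm (v' - z).
Proof.
move=> Hsp Hl M0 HM.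
have Hi : forall i : 'I_N, `|y i 0| <= 2 * (if v' i 0 != 0 then M else 0)
    + 2 * `|(v' - z) i 0| + (`|(z + y) i 0| - `|z i 0|).
  move=> i; rewrite !mxE.
  have h1 := ler_normB (z i 0 + y i 0) (z i 0).
  have h2 := ler_normB (z i 0 + y i 0) (y i 0).
  have E1 : z i 0 + y i 0 - z i 0 = y i 0 by rewrite addrC addKr.
  have E2 : z i 0 + y i 0 - y i 0 = z i 0 by rewrite addrK.
  rewrite E1 in h1; rewrite E2 in h2.
  have h3 := HM i.
  have h4 := normr_ge0 (v' i 0 - z i 0).
  case: (eqVneq (v' i 0) 0) => [->|Hne] /=.
    rewrite sub0r normrN; lra.
  lra.
apply: (le_trans (ler_sum _ (fun i _ => Hi i))).
rewrite !big_split /= -!mulr_sumr sumrN.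

have HS : \sum_(i < N) (if v' i 0 != 0 then M else 0) <= s%:R * M.
  rewrite -big_mkcond /= sumr_const -[M *+ _]mulr_natl.

  apply: ler_wpM2r => //; rewrite ler_nat.
  by move: Hsp; rewrite /sparse.
move: Hl; rewrite /l1norm => Hl.
lra.
Qed.

End Aux.
Arguments linf_le {R N}.
Arguments Dpow_unit {R N}.
Arguments Dpow_bound {R N}.
Arguments DpowT_bound {R N}.
Arguments cone {R N}.

Theorem theorem2 (R : realType) (beta r : nat) :
  (beta = 1 \/ beta = 2)%N -> (beta <= r)%N ->
  exists C : R, 0 < C /\
  forall (N : nat) (delta c : R) (J1 J2 : int) (x q u xh : 'cV[R]_N) (s : nat),
    0 < delta ->
    (forall i : 'I_N, 0 <= x i 0 <= 1) ->
    sigma_delta r (alphabet c delta J1 J2) x q u ->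
    linfnorm u <= delta / 2 ->
    is_minimizer beta r delta q xh ->
    (1 <= s <= N)%N ->
    l2norm (xh - x) <=
      C * (Num.sqrt (s%:R) * delta
           + Num.sqrt (sigma_s s (((Dmx R N) ^+ beta)^T *m x) * delta)).
Proof.
move=> _ Hbr.
set cc : R := 2 ^+ r.
have cc1 : 1 <= cc by rewrite /cc exprn_ege1 // ler1n.
exists (4 * cc * cc); split; first by nra.
move=> N delta c J1 J2 x q u xh s Hd _ [_ Hu] Hlu [Hfe Hmin] /andP[Hs1 HsN].
set P := Dmx R N ^+ r.
set v1 := invmx P *m (xh - q).
have Hv1 : P *m v1 = xh - q by rewrite /v1 mulKVmx // /P Dpow_unit.
have Hfe' : linfnorm v1 <= delta / 2 by exact: Hfe.
clearbody v1.
set v := v1 - u.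
have Hw : xh - x = P *m v by rewrite /v mulmxBr Hv1 Hu opprB addrA subrK.
have Hvb : forall i, `|v i 0| <= delta.
  move=> i; rewrite /v !mxE.
  apply: (le_trans (ler_normB _ _)).
  have := linf_le v1 i; have := linf_le u i; lra.
have Hxf : feasible r delta q x by rewrite /feasible -Hu mulKmx // Dpow_unit.
have Hm := Hmin x Hxf.
set w := xh - x.
set z := (Dmx R N ^+ beta)^T *m x.
set y := (Dmx R N ^+ beta)^T *m w.
have Hzy : z + y = (Dmx R N ^+ beta)^T *m xh by rewrite -mulmxDr /w addrC subrK.
set a : R := 2 ^+ (r - beta).
set b : R := 2 ^+ beta.
have Hab : a * b = cc by rewrite /a /b /cc -exprD subnK.
have a0 : 1 <= a by rewrite /a exprn_ege1 // ler1n.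
have b1 : 1 <= b by rewrite /b exprn_ege1 // ler1n.
have d0 : 0 <= delta by lra.
have Hwb : forall i, `|w i 0| <= cc * delta.
  by move=> i; rewrite /w Hw; apply: Dpow_bound.
have Hyb : forall i, `|y i 0| <= b * (cc * delta).
  move=> i; apply: DpowT_bound => //; apply: mulr_ge0 => //; lra.
set p := Dmx R N ^+ (r - beta) *m v.
have Hpb : forall i, `|p i 0| <= a * delta by move=> i; apply: Dpow_bound.
have HP : P = Dmx R N ^+ beta *m Dmx R N ^+ (r - beta) by rewrite mulmxE -exprD subnKC.
have Ewp : w^T *m w = y^T *m p.
  by rewrite {2}/w Hw HP -mulmxA mulmxA /y trmx_mul trmxK.
have Hm' : l1norm (z + y) <= l1norm z by rewrite Hzy; exact: Hm.
clearbody w y z p.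
have Hsum : \sum_i (w i 0) ^+ 2 = \sum_i y i 0 * p i 0.
  have := congr1 (fun M : 'M[R]_1 => M 0 0) Ewp; rewrite /= !mxE => E.
  under eq_bigr do rewrite expr2.
  transitivity (\sum_j w^T 0 j * w j 0); first by apply: eq_bigr => j _; rewrite mxE.
  by rewrite E; apply: eq_bigr => j _; rewrite mxE.
have Hs2 : \sum_i (w i 0) ^+ 2 <= l1norm y * (a * delta).
  rewrite Hsum /l1norm mulr_suml; apply: ler_sum => i _.
  apply: (le_trans (ler_norm _)); rewrite normrM; apply: ler_wpM2l => //.
set K : R := 4 * cc * cc.
set S := [set e | exists v' : 'cV[R]_N, sparse s v' /\ e = l1norm (v' - z)]%classic.
have Sne : (S !=set0)%classic.
  exists (l1norm (0 - z)); exists 0; split => //.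
  rewrite /sparse (_ : #|_| = 0%N) //.
  by apply: eq_card0 => i; rewrite !inE mxE eqxx.
have Hl1 : forall v' : 'cV[R]_N, 0 <= l1norm v'.
  by move=> v'; apply: sumr_ge0 => i _.
have Hsig0 : 0 <= sigma_s s z.
  apply: lb_le_inf => // e [v' [_ ->]]; exact: Hl1.
have HK : forall e, S e -> \sum_i (w i 0) ^+ 2 <= K * (s%:R * delta ^+ 2) + K * delta * e.
  move=> e [v' [Hsp ->]].
  have M0 : 0 <= b * (cc * delta) by apply: mulr_ge0; [lra | apply: mulr_ge0; lra].
  have Hc := @cone R N z y v' s _ Hsp Hm' M0 Hyb.
  have e0 := Hl1 (v' - z).
  move: Hc e0; set ee := l1norm (v' - z) => Hc e0.
  have h3 : a <= cc by nra.
  have ad0 : 0 <= a * delta by apply: mulr_ge0; lra.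
  have h4 : a * (delta * ee) <= cc * cc * (delta * ee).
    apply: ler_wpM2r; [exact: mulr_ge0 | nra].
  have h1 : l1norm y * (a * delta) <= (2 * (s%:R * (b * (cc * delta))) + 2 * ee) * (a * delta).
    exact: ler_wpM2r.
  have h2 : (2 * (s%:R * (b * (cc * delta))) + 2 * ee) * (a * delta)
      = 2 * (cc * cc) * (s%:R * delta ^+ 2) + 2 * (a * (delta * ee)).
    rewrite -Hab; ring.
  rewrite /K.
  have h5 : 0 <= cc * cc * (s%:R * delta ^+ 2) by apply: mulr_ge0; [nra | apply: mulr_ge0; [exact: ler0n | exact: sqr_ge0]].
  have -> : 4 * cc * cc * (s%:R * delta ^+ 2) + 4 * cc * cc * delta * ee
     = 4 * (cc * cc * (s%:R * delta ^+ 2)) + 4 * (cc * cc * (delta * ee)) by ring.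
  move: h1 h2 h4 h5 Hs2.
  set T1 := cc * cc * (s%:R * delta ^+ 2).
  set T2 := a * (delta * ee).
  set T3 := cc * cc * (delta * ee).
  set L := l1norm y * (a * delta).
  set L2 := (2 * (s%:R * (b * (cc * delta))) + 2 * ee) * (a * delta).
  move=> h1 h2 h4 h5 Hs2.
  rewrite -mulrA -/T1 in h2.
  have h6 : 0 <= T3 by rewrite /T3; apply: mulr_ge0; [nra | apply: mulr_ge0].
  clearbody T1 T2 T3 L L2.
  lra.
have Kd : 0 < K * delta by rewrite /K; apply: mulr_gt0 => //; nra.
have Hinf : (\sum_i (w i 0) ^+ 2 - K * (s%:R * delta ^+ 2)) / (K * delta) <= sigma_s s z.
  apply: lb_le_inf => // e' He'.
  rewrite ler_pdivrMr //; have := HK e' He'; lra.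
move: Hinf; rewrite ler_pdivrMr // => Hinf.
set sg := sigma_s s z in Hsig0 Hinf *.
set X := Num.sqrt s%:R * delta + Num.sqrt (sg * delta).
have hA : Num.sqrt (s%:R : R) ^+ 2 = s%:R by rewrite sqr_sqrtr // ler0n.
have hB : Num.sqrt (sg * delta) ^+ 2 = sg * delta by rewrite sqr_sqrtr //; apply: mulr_ge0.
have A0 := sqrtr_ge0 (s%:R : R).
have B0 := sqrtr_ge0 (sg * delta).
have X0 : 0 <= X by rewrite /X; apply: addr_ge0 => //; apply: mulr_ge0.
have K1 : 1 <= K by rewrite /K; nra.
have HX2 : s%:R * delta ^+ 2 + sg * delta <= X ^+ 2.
  have -> : X ^+ 2 = Num.sqrt (s%:R : R) ^+ 2 * delta ^+ 2
      + 2 * (Num.sqrt (s%:R : R) * delta * Num.sqrt (sg * delta)) + Num.sqrt (sg * delta) ^+ 2.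
    by rewrite /X; ring.
  rewrite hA hB.
  have : 0 <= Num.sqrt (s%:R : R) * delta * Num.sqrt (sg * delta).
    by apply: mulr_ge0 => //; apply: mulr_ge0.
  lra.
have HKX : \sum_i (w i 0) ^+ 2 <= (K * X) ^+ 2.
  have : K * (s%:R * delta ^+ 2 + sg * delta) <= K * X ^+ 2 by apply: ler_wpM2l => //; lra.
  have : K * X ^+ 2 <= (K * X) ^+ 2 by rewrite exprMn; apply: ler_wpM2r; [exact: sqr_ge0 | nra].
  lra.
rewrite /l2norm -(ger0_norm (mulr_ge0 (ltW (lt_le_trans ltr01 K1)) X0)) -sqrtr_sqr.
by rewrite ler_sqrt // sqr_ge0.
Qed.
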